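(* Let $T>0$, $\gamma\in(0,1]$, $C_T=\{(t,s):0<s<t<T\}$, and let $g_1,g_2$ be Hölder continuous functions of order $\gamma$ on $C_T$. Define, for $(t,s)\in C_T$, $$h(t,s)=\int_s^t\frac{g_1(t,z)\,g_2(z,s)}{\sqrt{t-z}\,\sqrt{z-s}}\,dz.$$ Then $h$ is Hölder continuous of order $\gamma$ on $C_T$. *)

(* Defs.v *)
From HB Require Import structures.
From mathcomp Require Import all_boot all_order all_algebra.
From mathcomp Require Import all_classical all_reals all_analysis.
Set Implicit Arguments. Unset Strict Implicit. Unset Printing Implicit Defensive.
Import Order.TTheory GRing.Theory Num.Theory.
Local Open Scope ring_scope.
Local Open Scope classical_set_scope.

Definition inCT {R : realType} (T t s : R) : Prop := 0 < s /\ s < t /\ t < T.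

Definition holder_CT {R : realType} (T gam : R) (f : R -> R -> R) : Prop :=
  exists K : R, forall t s t' s', inCT T t s -> inCT T t' s' ->
    `|f t s - f t' s'| <= K * (`|t - t'| `^ gam + `|s - s'| `^ gam).

Definition hconv {R : realType} (g1 g2 : R -> R -> R) (t s : R) : R :=
  Rintegral (@lebesgue_measure R) `]s, t[
    (fun z => g1 t z * g2 z s / (Num.sqrt (t - z) * Num.sqrt (z - s))).

(* Main.v *)
Require Import Defs.
From HB Require Import structures.
From mathcomp Require Import all_boot all_order all_algebra.
From mathcomp Require Import all_classical all_reals all_analysis.
From mathcomp Require Import measurable_realfun.
From mathcomp Require Import ring lra.
Import numFieldNormedType.Exports.
Import Order.TTheory GRing.Theory Num.Theory.
Local Open Scope ring_scope.
Local Open Scope classical_set_scope.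

Section cov.
Context {R : realType}.
Local Notation mu := (@lebesgue_measure R).

Lemma mphi_aff (a d : R) : measurable_fun [set: R] (fun u : R => a + d * u).
Proof.
apply: measurable_funD; first exact: measurable_cst.
apply: measurable_funM; first exact: measurable_cst.
exact: measurable_id.
Qed.

Lemma cov_measure (a d : R) (d0 : 0 < d) (A : set R) : measurable A ->
  mu A = pushforward (mscale (NngNum (ltW d0)) mu) (fun u : R => a + d * u) A.
Proof.
move: A.
unshelve refine (@lebesgue_measure_unique R (@pushforward _ _ (measurableTypeR R) (measurableTypeR R) R (mscale (NngNum (ltW d0)) mu) (fun u : R => a + d * u) : {measure set (measurableTypeR R) -> \bar R}) _).
  exact: mphi_aff.
move=> _ [[x1 x2] _ <-].
change (mu `]x1, x2] = mule (d%:E) (mu (preimage (fun u : R => a + d * u) `]x1, x2]))).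
rewrite (_ : _ @^-1` _ = `](x1 - a) / d, (x2 - a) / d]); last first.
  apply/seteqP; split=> u /=; rewrite !in_itv /= => /andP[h1 h2];
    apply/andP; split.
  - by rewrite ltr_pdivrMr // mulrC ltrBlDl.
  - by rewrite ler_pdivlMr // mulrC lerBrDl.
  - by move: h1; rewrite ltr_pdivrMr // mulrC ltrBlDl.
  - by move: h2; rewrite ler_pdivlMr // mulrC lerBrDl.
rewrite !lebesgue_measure_itv /= !lte_fin.
have -> : ((x1 - a) / d < (x2 - a) / d) = (x1 < x2).
  by rewrite ltr_pM2r ?invr_gt0 // ltrD2r.
case: ifPn => _; last by rewrite mule0.
rewrite -!EFinD -EFinM; congr EFin; field; exact: lt0r_neq0.
Qed.

Lemma cov_ge0 (a d : R) (d0 : 0 < d) (D : set R) (g : R -> \bar R) :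
  measurable D -> measurable_fun D g -> (forall x, D x -> (0 <= g x)%E) ->
  (\int[mu]_(x in D) g x =
   d%:E * \int[mu]_(u in (fun u : R => (a + d * u)%R) @^-1` D) g (a + d * u)%R)%E.
Proof.
move=> mD mg g0.
pose nu := @measure_function_pushforward__canonical__measure_function_Measure _ _ (measurableTypeR R) (measurableTypeR R) R (mscale (NngNum (ltW d0)) mu) (fun u : R => a + d * u) (mphi_aff a d).
rewrite (eq_measure_integral nu); last first.
  by move=> A mA _; apply: cov_measure.
rewrite (@ge0_integral_pushforward _ _ (measurableTypeR R) (measurableTypeR R) R _ (mphi_aff a d)) //; last first.
  by move=> y /set_mem; apply: g0.
rewrite ge0_integral_mscale //.
- by rewrite -[X in measurable X]setTI; apply: (mphi_aff a d).
- apply: (measurable_comp mD _ mg); first by move=> _ [x Dx <-].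
  exact: measurable_funTS (mphi_aff a d).
- by move=> x Dx; apply: g0.
Qed.

Lemma cov_Rint (a d : R) (d0 : 0 < d) (D : set R) (f : R -> R) :
  measurable D -> measurable_fun D f ->
  mu.-integrable ((fun u : R => (a + d * u)%R) @^-1` D) (EFin \o (fun u => f (a + d * u))) ->
  \int[mu]_(x in D) f x = d * \int[mu]_(u in (fun u : R => (a + d * u)%R) @^-1` D) f (a + d * u).
Proof.
move=> mD mf intf.
have mpre : measurable ((fun u : R => (a + d * u)%R) @^-1` D).
  by rewrite -[X in measurable X]setTI; apply: (mphi_aff a d).
have mEf : measurable_fun D (EFin \o f) by exact/measurable_EFinP.
rewrite /Rintegral integralE.
rewrite (@cov_ge0 a d d0 D _ mD (measurable_funepos mEf)); last by move=> x _; exact: funepos_ge0.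
rewrite (@cov_ge0 a d d0 D _ mD (measurable_funeneg mEf)); last by move=> x _; exact: funeneg_ge0.
rewrite [X in _ = _ * fine X]integralE.
set P := (fun u : R => (a + d * u)%R) @^-1` D.
have e1 : (\int[mu]_(u in P) (EFin \o f)^\+ (a + d * u)%R =
   \int[mu]_(u in P) (EFin \o (fun u => f (a + d * u)%R))^\+ u)%E.
  by apply: eq_integral => u _; rewrite !funeposE.
have e2 : (\int[mu]_(u in P) (EFin \o f)^\- (a + d * u)%R =
   \int[mu]_(u in P) (EFin \o (fun u => f (a + d * u)%R))^\- u)%E.
  by apply: eq_integral => v _; rewrite !funenegE.
rewrite e1 e2.
have h1 : (\int[mu]_(x in P) ((EFin \o (fun u => f (a + d * u)%R)) ^\+ x))%E \is a fin_num.
  by apply: integrable_fin_num => //; apply: integrable_funepos.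
have h2 : (\int[mu]_(x in P) ((EFin \o (fun u => f (a + d * u)%R)) ^\- x))%E \is a fin_num.
  by apply: integrable_fin_num => //; apply: integrable_funeneg.
rewrite -muleBr //; last by apply: fin_num_adde_defr.
rewrite fineM //; rewrite fin_numB; apply/andP; split; [exact: h1|exact: h2].
Qed.
End cov.

Section weight.
Context {R : realType}.
Local Notation mu := (@lebesgue_measure R).

Definition wgt (u : R) : R := (Num.sqrt u * Num.sqrt (1 - u))^-1.

Lemma wgt_ge0 u : 0 <= wgt u.
Proof. by rewrite /wgt invr_ge0 mulr_ge0 // sqrtr_ge0. Qed.

Lemma wgt_cont (x : R) : 0 < x < 1 -> {for x, continuous wgt}.
Proof.
case/andP=> x0 x1; apply: continuousV.
  by rewrite mulf_neq0 // gt_eqF // sqrtr_gt0 // subr_gt0.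
apply: continuousM; first exact: sqrt_continuous.
apply: (@continuous_comp _ _ _ (fun u : R => 1 - u)); last exact: sqrt_continuous.
apply: continuousB; [exact: cst_continuous | exact: cvg_id].
Qed.

Definition asg (u : R) : R := asin (2 * u - 1).

Lemma asg_derive (x : R) : 0 < x < 1 -> is_derive x 1 asg (wgt x).
Proof.
case/andP=> x0 x1.
have h1 : is_derive x 1 (fun u : R => 2 * u - 1) 2.
  by apply: is_derive_eq; rewrite subr0 -[RHS]mulr1.
have h2 : -1 < 2 * x - 1 < 1 by apply/andP; split; lra.
have := @is_derive1_comp R asin (fun u : R => 2 * u - 1) x _ _ (is_derive1_asin h2) h1.
rewrite /asg /=.
have -> : Num.sqrt (1 - (2 * x - 1) ^+ 2) = 2 * (Num.sqrt x * Num.sqrt (1 - x)).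
  rewrite (_ : 1 - (2 * x - 1) ^+ 2 = 2 ^+ 2 * (x * (1 - x))); last by ring.
  rewrite sqrtrM; last by lra. rewrite sqrtr_sqr ger0_norm; last by lra. rewrite sqrtrM //; lra.
rewrite /wgt invfM mulrAC mulVf ?mul1r //; by rewrite pnatr_eq0.
Qed.

Lemma asg_cont (z : R) : 0 < z < 1 -> {for z, continuous asg}.
Proof.
move=> hz; apply/differentiable_continuous/derivable1_diffP.
by case: (asg_derive _ hz).
Qed.

Lemma wgt_seg (a b : R) : 0 < a -> a < b -> b < 1 ->
  (\int[mu]_(x in `[a, b]) (wgt x)%:E <= pi%:E)%E.
Proof.
move=> a0 ab b1.
rewrite (@continuous_FTC2 _ wgt asg a b ab).
- rewrite -EFinB lee_fin /asg.
  have h1 : asin (2 * b - 1) <= pi / 2 by apply: asin_lepi2; apply/andP; split; lra.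
  have h2 : - (pi / 2) <= asin (2 * a - 1) by apply: asin_geNpi2; apply/andP; split; lra.
  lra.
- apply: continuous_in_subspaceT => x; rewrite inE /= in_itv /= => /andP[h1 h2].
  by apply: wgt_cont; apply/andP; split; lra.
- split.
  + move=> x; rewrite in_itv /= => /andP[h1 h2].
    have hx : 0 < x < 1 by apply/andP; split; lra.
    by case: (asg_derive _ hx).
  + apply: cvg_at_right_filter; apply: asg_cont; apply/andP; split; lra.
  + apply: cvg_at_left_filter; apply: asg_cont; apply/andP; split; lra.
- move=> x; rewrite in_itv /= => /andP[h1 h2].
  have hx : 0 < x < 1 by apply/andP; split; lra.
  by rewrite derive1E; apply: derive_val; apply: asg_derive.
Qed.

Lemma cinv_props (n : nat) : 0 < (n.+3%:R : R)^-1 /\ (n.+3%:R : R)^-1 * n.+3%:R = 1 /\ (3 : R) <= n.+3%:R.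
Proof.
have k0 : (0 : R) < n.+3%:R by rewrite ltr0n.
split; first by rewrite invr_gt0.
split; first by rewrite mulVf // gt_eqF.
by rewrite (ler_nat R 3 n.+3).
Qed.

Lemma wgt_measurable : measurable_fun (`]0, 1[ : set R) (wgt : R -> R).
Proof.
apply: open_continuous_measurable_fun; first exact: interval_open.
move=> x; rewrite inE /= in_itv /= => hx; exact: wgt_cont.
Qed.

Lemma wgt_int_le : (\int[mu]_(x in (`]0%R, 1%R[ : set R)) (wgt x)%:E <= pi%:E)%E.
Proof.
pose c (n : nat) : R := (n.+3%:R)^-1.
pose F (n : nat) := `[c n, 1 - c n]%classic.
have FS n : F n `<=` `]0, 1[%classic.
  move=> x; rewrite /F /= !in_itv /= => /andP[h1 h2].
  have [c0 [ck k3]] := cinv_props n.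
  rewrite -/(c n) in c0 ck; apply/andP; split; lra.
have U : `]0, 1[%classic = \bigcup_n F n.
  apply/seteqP; split => x; last by move=> [n _ /FS].
  rewrite /= in_itv /= => /andP[x0 x1].
  pose ie := x^-1 + (1 - x)^-1.
  have hk := truncnS_gt ie.
  set m := Num.Def.trunc ie in hk.
  exists m; first by [].
  have [c0 [ck k3]] := cinv_props m.
  rewrite -/(c m) in c0 ck.
  have hm : (m.+1%:R : R) <= m.+3%:R by rewrite ler_nat; do 2 apply: leqW.
  have ix : x * x^-1 = 1 by rewrite mulfV // gt_eqF.
  have ix' : (1 - x) * (1 - x)^-1 = 1 by rewrite mulfV // gt_eqF // subr_gt0.
  have ix0 : 0 < x^-1 by rewrite invr_gt0.
  have ix0' : 0 < (1 - x)^-1 by rewrite invr_gt0 subr_gt0.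
  rewrite /F /= in_itv /=.
  move: hk; rewrite /ie => hk.
  set k := (m.+3%:R : R) in ck k3 hm.
  apply/andP; split; nra.
have nd : {homo F : n m / (n <= m)%N >-> (n <= m)%O}.
  move=> n m nm; rewrite subsetEset => x; rewrite /F /= !in_itv /= => /andP[h1 h2].
  have [c0 [ck k3]] := cinv_props n.
  have [c0' [ck' k3']] := cinv_props m.
  rewrite -/(c n) in c0 ck; rewrite -/(c m) in c0' ck'.
  have hnm : (n.+3%:R : R) <= m.+3%:R by rewrite ler_nat !ltnS.
  apply/andP; split; nra.
have mF n : measurable (F n) by exact: measurable_itv.
have mf n : measurable_fun (F n) (EFin \o (wgt : R -> R)).
  apply/measurable_EFinP; exact: (measurable_funS (measurable_itv _) (FS n) wgt_measurable).
have f0 n x : F n x -> (0 <= (EFin \o wgt) x)%E by move=> _; rewrite lee_fin wgt_ge0.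
have := ge0_nondecreasing_set_cvg_integral (mu := mu) nd mF mf f0.
rewrite -U => hc.
rewrite -(cvg_lim _ hc) //.
apply: lime_le; first by apply/cvg_ex; eexists; exact: hc.
apply: nearW => n.
have [c0 [ck k3]] := cinv_props n.
rewrite -/(c n) in c0 ck; set k := (n.+3%:R : R) in ck k3; apply: wgt_seg; nra.
Qed.

Lemma wgt_integrable : mu.-integrable (`]0, 1[ : set R) (EFin \o (wgt : R -> R)).
Proof.
apply/integrableP; split; first by apply/measurable_EFinP; exact: wgt_measurable.
apply: (@le_lt_trans _ _ (\int[mu]_(x in (`]0%R, 1%R[ : set R)) (wgt x)%:E)%E); last exact: (le_lt_trans wgt_int_le (ltry _)).
rewrite le_eqVlt; apply/orP; left; apply/eqP; apply: eq_integral => x _.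
by rewrite /comp abse_EFin ger0_norm // wgt_ge0.
Qed.
End weight.

Section holder.
Context {R : realType}.
Local Notation mu := (@lebesgue_measure R).

Lemma holder_nonneg (T gam : R) f : holder_CT T gam f ->
  exists K : R, 0 <= K /\ forall t s t' s', inCT T t s -> inCT T t' s' ->
    `|f t s - f t' s'| <= K * (`|t - t'| `^ gam + `|s - s'| `^ gam).
Proof.
case=> K HK; exists (Num.max K 0); split; first by rewrite le_max lexx orbT.
move=> t s t' s' h h'; apply: (le_trans (HK _ _ _ _ h h')).
by apply: ler_wpM2r; [rewrite addr_ge0 // powR_ge0 | rewrite le_max lexx].
Qed.

Lemma holder_bounded (T gam : R) f : 0 < T -> 0 < gam -> holder_CT T gam f ->
  exists M : R, 0 <= M /\ forall t s, inCT T t s -> `|f t s| <= M.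
Proof.
move=> T0 g0 /holder_nonneg [K [K0 HK]].
have h0 : inCT T (T / 2) (T / 4) by rewrite /inCT; split; [|split]; lra.
exists (`|f (T / 2) (T / 4)| + K * (T `^ gam + T `^ gam)); split.
  by rewrite addr_ge0 // mulr_ge0 // addr_ge0 // powR_ge0.
move=> t s hts; have := HK _ _ _ _ hts h0.
case: hts => s0 [st tT].
have b1 : `|t - T / 2| `^ gam <= T `^ gam.
  apply: ge0_ler_powR; [exact: ltW| by rewrite nnegrE| by rewrite nnegrE ltW|].
  by rewrite ler_norml; apply/andP; split; lra.
have b2 : `|s - T / 4| `^ gam <= T `^ gam.
  apply: ge0_ler_powR; [exact: ltW| by rewrite nnegrE| by rewrite nnegrE ltW|].
  by rewrite ler_norml; apply/andP; split; lra.
move=> h; have h' : `|f t s - f (T / 2) (T / 4)| <= K * (T `^ gam + T `^ gam).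
  apply: (le_trans h); apply: ler_wpM2l => //; lra.
have := ler_normD (f t s - f (T / 2) (T / 4)) (f (T / 2) (T / 4)).
rewrite subrK => h2; lra.
Qed.

Lemma holder_cont (phi : R -> R) (a b K gam : R) : 0 < gam -> 0 <= K ->
  (forall x y, a < x < b -> a < y < b -> `|phi x - phi y| <= K * `|x - y| `^ gam) ->
  forall z, a < z < b -> {for z, continuous phi}.
Proof.
move=> g0 K0 Hp z /andP[az zb].
apply/cvgrPdist_lt => e e0.
pose r := (e / (K + 1)) `^ (gam^-1).
have r0 : 0 < r by rewrite powR_gt0 // divr_gt0 //; lra.
have er : r `^ gam = e / (K + 1).
  by rewrite /r -powRrM mulVf ?gt_eqF // powRr1 // ltW // divr_gt0 //; lra.
apply/nbhs_ballP; exists (Num.min r (Num.min (z - a) (b - z))) => /=.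
  by rewrite !lt_min r0 !subr_gt0 az zb.
move=> y; rewrite /ball /= !lt_min => /andP[hr /andP[ha hb]].
have hy : a < y < b.
  have := ler_norm (z - y); have := ler_norm (y - z); rewrite distrC => h1 h2.
  apply/andP; split; lra.
have hz : a < z < b by rewrite az zb.
apply: (le_lt_trans (Hp _ _ hz hy)).
have : `|z - y| `^ gam < r `^ gam.
  by apply: gt0_ltr_powR => //; rewrite nnegrE // ltW.
rewrite er => h.
have hK : K * `|z - y| `^ gam <= K * (e / (K + 1)) by apply: ler_wpM2l => //; exact: ltW.
apply: (le_lt_trans hK).
rewrite mulrA ltr_pdivrMr; last lra.
nra.
Qed.
End holder.

Section main.
Context {R : realType}.
Local Notation mu := (@lebesgue_measure R).
Variables (T gam : R) (g1 g2 : R -> R -> R).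
Hypotheses (T0 : 0 < T) (g0 : 0 < gam).
Variables (K1 K2 M1 M2 : R).
Hypotheses (K10 : 0 <= K1) (K20 : 0 <= K2) (M10 : 0 <= M1) (M20 : 0 <= M2).
Hypothesis HK1 : forall t s t' s', inCT T t s -> inCT T t' s' ->
    `|g1 t s - g1 t' s'| <= K1 * (`|t - t'| `^ gam + `|s - s'| `^ gam).
Hypothesis HK2 : forall t s t' s', inCT T t s -> inCT T t' s' ->
    `|g2 t s - g2 t' s'| <= K2 * (`|t - t'| `^ gam + `|s - s'| `^ gam).
Hypothesis HM1 : forall t s, inCT T t s -> `|g1 t s| <= M1.
Hypothesis HM2 : forall t s, inCT T t s -> `|g2 t s| <= M2.

Definition Hf (t s u : R) : R :=
  g1 t (s + (t - s) * u) * g2 (s + (t - s) * u) s * wgt u.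
Definition Fi (t s z : R) : R :=
  g1 t z * g2 z s / (Num.sqrt (t - z) * Num.sqrt (z - s)).

Lemma inCT_mid t s u : inCT T t s -> 0 < u < 1 ->
  inCT T t (s + (t - s) * u) /\ inCT T (s + (t - s) * u) s.
Proof.
case=> s0 [st tT] /andP[u0 u1]; rewrite /inCT.
have h1 : 0 < (t - s) * u by rewrite mulr_gt0 // subr_gt0.
have h2 : (t - s) * u < t - s by rewrite gtr_pMr // subr_gt0.
split; split; try split; lra.
Qed.

Lemma inCT_seg t s z : inCT T t s -> s < z < t -> inCT T t z /\ inCT T z s.
Proof. by case=> s0 [st tT] /andP[sz zt]; rewrite /inCT; split; split; try split; lra. Qed.

Lemma g1_cont t s : inCT T t s -> forall z, s < z < t -> {for z, continuous (g1 t)}.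
Proof.
move=> hts; apply: (@holder_cont R (g1 t) s t K1 gam g0 K10) => x y hx hy.
have [hx1 _] := inCT_seg _ _ _ hts hx; have [hy1 _] := inCT_seg _ _ _ hts hy.
by have := HK1 _ _ _ _ hx1 hy1; rewrite subrr normr0 powR0 ?gt_eqF // add0r.
Qed.

Lemma g2_cont t s : inCT T t s -> forall z, s < z < t -> {for z, continuous (fun z => g2 z s)}.
Proof.
move=> hts; apply: (@holder_cont R (fun z => g2 z s) s t K2 gam g0 K20) => x y hx hy.
have [_ hx1] := inCT_seg _ _ _ hts hx; have [_ hy1] := inCT_seg _ _ _ hts hy.
by have := HK2 _ _ _ _ hx1 hy1; rewrite subrr normr0 powR0 ?gt_eqF // addr0.
Qed.

Lemma phi_cont (a d x : R) : {for x, continuous (fun u : R => a + d * u)}.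
Proof.
apply: continuousD; first exact: cst_continuous.
apply: continuousM; [exact: cst_continuous | exact: cvg_id].
Qed.

Lemma H_cont t s : inCT T t s -> forall u, 0 < u < 1 -> {for u, continuous (Hf t s)}.
Proof.
move=> hts u hu.
have [s0 [st tT]] := hts.
have hz : s < s + (t - s) * u < t.
  case/andP: hu => u0 u1.
  have h1 : 0 < (t - s) * u by rewrite mulr_gt0 // subr_gt0.
  have h2 : (t - s) * u < t - s by rewrite gtr_pMr // subr_gt0.
  apply/andP; split; lra.
apply: continuousM; last exact: wgt_cont.
apply: continuousM.
- apply: (@continuous_comp _ _ _ (fun u : R => s + (t - s) * u) (g1 t)).
    exact: phi_cont.
  exact: g1_cont hts _ hz.
- apply: (@continuous_comp _ _ _ (fun u : R => s + (t - s) * u) (fun z => g2 z s)).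
    exact: phi_cont.
  exact: g2_cont hts _ hz.
Qed.

Lemma F_cont t s : inCT T t s -> {in `]s, t[, continuous (Fi t s)}.
Proof.
move=> hts z; rewrite inE /= in_itv /= => hz.
have [s0 [st tT]] := hts.
case/andP: (hz) => sz zt.
rewrite /Fi; apply: (@continuousM _ _ (fun z => g1 t z * g2 z s) (fun z => (Num.sqrt (t - z) * Num.sqrt (z - s))^-1)).
  apply: continuousM; first exact: g1_cont _ _ hts _ hz.
  exact: g2_cont _ _ hts _ hz.
apply: continuousV.
  by rewrite mulf_neq0 // gt_eqF // sqrtr_gt0 subr_gt0.
apply: continuousM.
- apply: (@continuous_comp _ _ _ (fun z : R => t - z)); last exact: sqrt_continuous.
  apply: continuousB; [exact: cst_continuous | exact: cvg_id].
- apply: (@continuous_comp _ _ _ (fun z : R => z - s)); last exact: sqrt_continuous.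
  apply: continuousB; [exact: cvg_id | exact: cst_continuous].
Qed.

Lemma alg t s u : inCT T t s -> 0 < u < 1 ->
  (t - s) * Fi t s (s + (t - s) * u) = Hf t s u.
Proof.
move=> [s0 [st tT]] /andP[u0 u1].
have d0 : 0 < t - s by rewrite subr_gt0.
rewrite /Fi /Hf /wgt.
have -> : t - (s + (t - s) * u) = (t - s) * (1 - u) by ring.
have -> : s + (t - s) * u - s = (t - s) * u by ring.
rewrite !sqrtrM ?(ltW d0) //.
have sd : Num.sqrt (t - s) * Num.sqrt (t - s) = t - s.
  by rewrite -expr2 sqr_sqrtr // ltW.
have n1 : Num.sqrt (t - s) != 0 by rewrite gt_eqF // sqrtr_gt0.
have n2 : Num.sqrt u != 0 by rewrite gt_eqF // sqrtr_gt0.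
have n3 : Num.sqrt (1 - u) != 0 by rewrite gt_eqF // sqrtr_gt0 subr_gt0.
rewrite -[in X in X * _ = _]sd.
field.
by rewrite n1 n2 n3.
Qed.

Lemma H_bound t s u : inCT T t s -> 0 < u < 1 -> `|Hf t s u| <= M1 * M2 * wgt u.
Proof.
move=> hts hu; have [h1 h2] := inCT_mid _ _ _ hts hu.
rewrite /Hf !normrM (ger0_norm (wgt_ge0 _)).
apply: ler_wpM2r; first exact: wgt_ge0.
by apply: ler_pM => //; [exact: HM1 | exact: HM2].
Qed.

Lemma H_measurable t s : inCT T t s -> measurable_fun (`]0, 1[ : set R) (Hf t s).
Proof.
move=> hts; apply: open_continuous_measurable_fun; first exact: interval_open.
move=> x; rewrite inE /= in_itv /= => hx; exact: H_cont.
Qed.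

Lemma H_integrable t s : inCT T t s -> mu.-integrable (`]0, 1[ : set R) (EFin \o Hf t s).
Proof.
move=> hts.
have iw : mu.-integrable (`]0, 1[ : set R) (EFin \o (fun u => M1 * M2 * wgt u)).
  apply: (@eq_integrable _ _ _ mu _ (measurable_itv _) (fun x => ((M1 * M2)%:E * (EFin \o wgt) x)%E)).
    by move=> x _; rewrite /= EFinM.
  apply: integrableZl => //; exact: wgt_integrable.
apply: (le_integrable _ _ _ iw) => //.
  by apply/measurable_EFinP; exact: H_measurable.
move=> x; rewrite /= in_itv /= => hx.
rewrite lee_fin (ger0_norm (_ : 0 <= M1 * M2 * wgt x)).
  exact: H_bound.
by rewrite mulr_ge0 ?mulr_ge0 ?wgt_ge0.
Qed.


Lemma H_rep t s : inCT T t s -> hconv g1 g2 t s = \int[mu]_(u in (`]0, 1[ : set R)) Hf t s u.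
Proof.
move=> hts; have [s0 [st tT]] := hts.
have d0 : 0 < t - s by rewrite subr_gt0.
have pre : (fun u : R => (s + (t - s) * u)%R) @^-1` (`]s, t[ : set R) = (`]0, 1[ : set R).
  apply/seteqP; split => u /=; rewrite !in_itv /=.
  - by move=> /andP[h1 h2]; apply/andP; split; nra.
  - by move=> /andP[u0 u1]; apply/andP; split; nra.
have mF : measurable_fun (`]s, t[ : set R) (Fi t s).
  apply: open_continuous_measurable_fun; first exact: interval_open.
  exact: F_cont.
have intF : mu.-integrable (`]0, 1[ : set R) (EFin \o (fun u => Fi t s (s + (t - s) * u))).
  apply: (@eq_integrable _ _ _ mu _ (measurable_itv _) (fun u => ((t - s)^-1)%:E * (EFin \o Hf t s) u)%E).
    move=> u; rewrite inE /= in_itv /= => hu.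
    by rewrite -EFinM -(alg _ _ _ hts hu) mulrA mulVf ?mul1r // gt_eqF.
  by apply: integrableZl => //; exact: H_integrable.
have intF' := intF; rewrite -pre in intF'.
rewrite /hconv (@cov_Rint _ s (t - s) d0 _ (Fi t s) (measurable_itv _) mF intF') pre.
rewrite -RintegralZl //; apply: eq_Rintegral => u; rewrite inE /= in_itv /= => hu.
exact: alg.
Qed.

Lemma z_bound t s t' s' u : 0 < u < 1 ->
  `|(s + (t - s) * u) - (s' + (t' - s') * u)| `^ gam <= `|t - t'| `^ gam + `|s - s'| `^ gam.
Proof.
case/andP=> u0 u1.
have e : (s + (t - s) * u) - (s' + (t' - s') * u) = (1 - u) * (s - s') + u * (t - t') by ring.
have hb : `|(s + (t - s) * u) - (s' + (t' - s') * u)| <= (1 - u) * `|s - s'| + u * `|t - t'|.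
  rewrite e; apply: (le_trans (ler_normD _ _)).
  by rewrite !normrM (ger0_norm (ltW u0)) ger0_norm // subr_ge0 ltW.
have p1 := powR_ge0 `|t - t'| gam; have p2 := powR_ge0 `|s - s'| gam.
have na := normr_ge0 (s - s'); have nb := normr_ge0 (t - t').
case: (lerP `|s - s'| `|t - t'|) => hab.
- have : `|(s + (t - s) * u) - (s' + (t' - s') * u)| <= `|t - t'| by nra.
  move=> h; have := ge0_ler_powR (ltW g0) _ _ h; rewrite !nnegrE => /(_ (normr_ge0 _) nb) h'.
  lra.
- have : `|(s + (t - s) * u) - (s' + (t' - s') * u)| <= `|s - s'| by nra.
  move=> h; have := ge0_ler_powR (ltW g0) _ _ h; rewrite !nnegrE => /(_ (normr_ge0 _) na) h'.
  lra.
Qed.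

Lemma diff_bound t s t' s' u : inCT T t s -> inCT T t' s' -> 0 < u < 1 ->
  `|Hf t s u - Hf t' s' u| <=
  (2 * (M1 * K2 + M2 * K1) * (`|t - t'| `^ gam + `|s - s'| `^ gam)) * wgt u.
Proof.
move=> hts hts' hu.
have [h1 h2] := inCT_mid _ _ _ hts hu; have [h1' h2'] := inCT_mid _ _ _ hts' hu.
set z := s + (t - s) * u in h1 h2 *; set z' := s' + (t' - s') * u in h1' h2' *.
set E := `|t - t'| `^ gam + `|s - s'| `^ gam.
have zb : `|z - z'| `^ gam <= E by exact: z_bound.
have p1 := powR_ge0 `|t - t'| gam; have p2 := powR_ge0 `|s - s'| gam.
have pz := powR_ge0 `|z - z'| gam.
rewrite /Hf -/z -/z' -mulrBl normrM (ger0_norm (wgt_ge0 _)).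
apply: ler_wpM2r; first exact: wgt_ge0.
set A := g1 t z; set B := g2 z s; set A' := g1 t' z'; set B' := g2 z' s'.
have -> : A * B - A' * B' = A * (B - B') + B' * (A - A') by ring.
apply: (le_trans (ler_normD _ _)); rewrite !normrM.
have b1 : `|A| * `|B - B'| <= M1 * (K2 * (2 * E)).
  apply: ler_pM => //; first exact: HM1.
  apply: (le_trans (HK2 _ _ _ _ h2 h2')); apply: ler_wpM2l => //; rewrite /E in zb *; lra.
have b2 : `|B'| * `|A - A'| <= M2 * (K1 * (2 * E)).
  apply: ler_pM => //; first exact: HM2.
  apply: (le_trans (HK1 _ _ _ _ h1 h1')); apply: ler_wpM2l => //.
  rewrite /E in zb *; lra.
have -> : 2 * (M1 * K2 + M2 * K1) * E = M1 * (K2 * (2 * E)) + M2 * (K1 * (2 * E)) by ring.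
exact: lerD b1 b2.
Qed.

Lemma main_holder : holder_CT T gam (hconv g1 g2).
Proof.
exists (2 * (M1 * K2 + M2 * K1) * pi).
move=> t s t' s' hts hts'.
have I1 := H_integrable _ _ hts; have I2 := H_integrable _ _ hts'.
rewrite !H_rep // -RintegralB //.
set E := `|t - t'| `^ gam + `|s - s'| `^ gam.
set C := 2 * (M1 * K2 + M2 * K1).
have E0 : 0 <= E by rewrite addr_ge0 // powR_ge0.
have C0 : 0 <= C by rewrite mulr_ge0 // addr_ge0 // mulr_ge0.
have iD : mu.-integrable (`]0, 1[ : set R) (EFin \o (fun u => Hf t s u - Hf t' s' u)).
  apply: (@eq_integrable _ _ _ mu _ (measurable_itv _) ((EFin \o Hf t s) \- (EFin \o Hf t' s'))%E).
    by move=> u _; rewrite /= EFinB.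
  exact: integrableB.
have iW : mu.-integrable (`]0, 1[ : set R) (EFin \o (fun u => C * E * wgt u)).
  apply: (@eq_integrable _ _ _ mu _ (measurable_itv _) (fun x => ((C * E)%:E * (EFin \o wgt) x)%E)).
    by move=> x _; rewrite /= EFinM.
  apply: integrableZl => //; exact: wgt_integrable.
apply: (le_trans (le_normr_Rintegral _ iD)) => //.
apply: (le_trans (le_Rintegral _ (integrable_norm iD) iW _)) => //.
  by move=> u; rewrite /= in_itv /= => hu; exact: diff_bound.
rewrite RintegralZl //; last exact: wgt_integrable.
have hw : \int[mu]_(u in (`]0, 1[ : set R)) wgt u <= pi.
  rewrite /Rintegral -[pi]/(fine (pi%:E)); apply: fine_le => //.
    by apply: integrable_fin_num => //; exact: wgt_integrable.
  exact: wgt_int_le.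
have -> : C * pi * E = C * E * pi by ring.
by apply: ler_wpM2l => //; rewrite mulr_ge0.
Qed.
End main.

Theorem lemma3p13 (R : realType) (T gam : R) (g1 g2 : R -> R -> R) :
  0 < T -> 0 < gam -> gam <= 1 ->
  holder_CT T gam g1 -> holder_CT T gam g2 ->
  holder_CT T gam (hconv g1 g2).
Proof.
move=> T0 g0 _ h1 h2.
have [K1 [K10 HK1]] := holder_nonneg _ _ _ h1.
have [K2 [K20 HK2]] := holder_nonneg _ _ _ h2.
have [M1 [M10 HM1]] := holder_bounded _ _ _ T0 g0 h1.
have [M2 [M20 HM2]] := holder_bounded _ _ _ T0 g0 h2.
exact: (main_holder T gam g1 g2 g0 K1 K2 M1 M2 K10 K20 M10 M20 HK1 HK2 HM1 HM2).
Qed.
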